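(* Let $k$ be a positive integer and let $H_k$ be the graph with half-edges obtained from the complete bipartite graph $K_{k,k}$ by deleting one vertex but keeping its $k$ incident edges as half-edges (each attached only at its other end vertex). Then $H_k$ is type 1, i.e. it admits a $(k+1)$-total colouring. Moreover, in every $(k+1)$-total colouring of $H_k$, all $k$ half-edges receive the same colour.
   Context: Graphs may contain half-edges: a half-edge has exactly one end vertex. A $(k+1)$-total colouring of such a graph assigns to each vertex, each edge and each half-edge one of $k+1$ colours so that no two adjacent vertices, no two edges/half-edges sharing an end vertex, and no vertex together with an edge or half-edge incident with it receive the same colour. The maximum degree of $H_k$ (counting half-edges) is $k$, and ''type 1'' means it has a total colouring with maximum degree $+1$ colours. *)

(* Defs.v *)
From mathcomp Require Import all_boot.
Set Implicit Arguments. Unset Strict Implicit. Unset Printing Implicit Defensive.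

(* A finite graph with half-edges: vertex type V, edge type E; each element e
   of E has a first end vertex (ends e).1 and a second end (ends e).2 which is
   [Some w] for an ordinary edge and [None] for a half-edge. *)

Definition incident (V E : finType) (ends : E -> V * option V) (v : V) (e : E) : Prop :=
  (ends e).1 = v \/ (ends e).2 = Some v.

Definition is_total_colouring (V E : finType) (ends : E -> V * option V) (n : nat)
    (cv : V -> 'I_n) (ce : E -> 'I_n) : Prop :=
  (forall (e : E) (u w : V), ends e = (u, Some w) -> cv u <> cv w) /\
  (forall (e f : E) (v : V), e <> f -> incident ends v e -> incident ends v f ->
       ce e <> ce f) /\
  (forall (e : E) (v : V), incident ends v e -> cv v <> ce e).

(* H_k: K_{k,k} with parts A = 'I_k and B = 'I_k (last vertex of B deleted);
   remaining B-vertices are 'I_k.-1.  Edges: a_i b_j (j : 'I_k.-1) and one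
   half-edge at each a_i (the former edge a_i b_{k-1}). *)
Definition Hk_V (k : nat) : finType := ('I_k + 'I_k.-1)%type.
Definition Hk_E (k : nat) : finType := (('I_k * 'I_k.-1) + 'I_k)%type.

Definition Hk_ends (k : nat) (e : Hk_E k) : Hk_V k * option (Hk_V k) :=
  match e with
  | inl (i, j) => (inl i, Some (inr j))
  | inr i => (inl i, None)
  end.

Definition Hk_half (k : nat) (i : 'I_k) : Hk_E k := inr i.

(* Main.v *)
Require Import Defs.
From mathcomp Require Import all_boot zify.
Set Implicit Arguments. Unset Strict Implicit.

Lemma sum_all1 (k : nat) (b : 'I_k -> bool) : k <= \sum_i (b i : nat) -> forall i, b i.
Proof.
move=> H i; apply/negPn/negP => Hb.
have : \sum_i (b i : nat) <= k.-1.
  rewrite (bigD1 i) //= (negbTE Hb) add0n.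
  apply: (@leq_trans (\sum_(j | j != i) 1)); first by apply: leq_sum => j _; exact: leq_b1.
  by rewrite sum_nat_const cardC1 card_ord muln1.
move: H; case: k i b Hb => [[]//|k] _ b _ H1 H2.
by have := leq_trans H1 H2; rewrite ltnn.
Qed.
Section U.
Variables (k : nat) (hk : 0 < k) (cv : Hk_V k -> 'I_k.+1) (ce : Hk_E k -> 'I_k.+1).
Hypothesis H : is_total_colouring (@Hk_ends k) cv ce.

Definition fa (i : 'I_k) (o : option (option 'I_k.-1)) : 'I_k.+1 :=
  match o with None => cv (inl i) | Some None => ce (inr i) | Some (Some j) => ce (inl (i, j)) end.
Definition gb (j : 'I_k.-1) (o : option 'I_k) : 'I_k.+1 :=
  match o with None => cv (inr j) | Some i => ce (inl (i, j)) end.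

Lemma fa_inj i : injective (fa i).
Proof.
case: H => Hv [He Hve].
have Hve' := fun e v Hi Heq => Hve e v Hi (esym Heq).
case=> [[j|]|] [[j'|]|] //= E.
- case: (eqVneq j j') => [->//|ne]; exfalso.
  by apply: (He (inl (i,j)) (inl (i,j')) (inl i)) E; [move=> [] /eqP; rewrite (negbTE ne) | left | left].
- by exfalso; apply: (He (inl (i,j)) (inr i) (inl i)) E; [|left|left].
- by exfalso; apply: (Hve' (inl (i,j)) (inl i)) E; left.
- by exfalso; apply: (He (inr i) (inl (i,j')) (inl i)) E; [|left|left].
- by exfalso; apply: (Hve' (inr i) (inl i)) E; left.
- by exfalso; apply: (Hve (inl (i,j')) (inl i)) E; left.
- by exfalso; apply: (Hve (inr i) (inl i)) E; left.
Qed.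
Lemma gb_inj j : injective (gb j).
Proof.
case: H => Hv [He Hve].
have Hve' := fun e v Hi Heq => Hve e v Hi (esym Heq).
case=> [i|] [i'|] //= E.
- case: (eqVneq i i') => [->//|ne]; exfalso.
  by apply: (He (inl (i,j)) (inl (i',j)) (inr j)) E; [move=> [] /eqP; rewrite (negbTE ne) | right | right].
- by exfalso; apply: (Hve' (inl (i,j)) (inr j)) E; right.
- by exfalso; apply: (Hve (inl (i',j)) (inr j)) E; right.
Qed.

Lemma sum_opt (T: finType) (F: option T -> nat): \sum_o F o = F None + \sum_x F (Some x).
Proof.
rewrite (bigD1 None) //=; congr (_ + _).
rewrite (reindex_omap Some (fun o => o)) //=; last by case.
by apply: eq_bigl => x; rewrite eqxx.
Qed.
Lemma inj_sum_le1 (T: finType) (C: eqType) (g: T -> C) (inj: injective g) c :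
  \sum_(o:T) (g o == c) <= 1.
Proof.
case: (pickP (fun o => g o == c)) => [o0 Ho0|H0].
  rewrite (bigD1 o0) //= Ho0 big1 // => o Ho.
  apply/eqP; rewrite eqb0; apply: contra Ho => /eqP Hg.
  by apply/eqP; apply: inj; rewrite Hg (eqP Ho0).
by rewrite big1 // => o _; rewrite H0.
Qed.
Lemma bij_sum_eq1 (T C: finType) (g: T -> C) (bij: bijective g) c :
  \sum_(o:T) (g o == c) = 1.
Proof.
rewrite -(reindex g (P := predT) (F := fun c' => nat_of_bool (c' == c))) /=; last first.
  by case: bij => h h1 h2; exists h.
by rewrite (bigD1 c) //= eqxx big1 // => c' /negbTE ->.
Qed.

Lemma eqA i c : (cv (inl i) == c) + ((ce (inr i) == c) + \sum_j (ce (inl (i, j)) == c)) = 1.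
Proof.
have bij : bijective (fa i).
  apply: (inj_card_bij (@fa_inj i)).
  by rewrite !card_option !card_ord prednK.
by rewrite -(bij_sum_eq1 bij c) sum_opt sum_opt.
Qed.

Lemma eqB j c : (cv (inr j) == c) + \sum_i (ce (inl (i, j)) == c) <= 1.
Proof. by rewrite -(sum_opt (fun o => nat_of_bool (gb j o == c))) inj_sum_le1 //; apply: (@gb_inj j). Qed.
Definition X c := \sum_i (cv (inl i) == c).
Definition Hc c := \sum_i (ce (inr i) == c).
Definition E c := \sum_i \sum_j (ce (inl (i, j)) == c).
Definition Y c := \sum_j (cv (inr j) == c).

Lemma sumA c : X c + (Hc c + E c) = k.
Proof.
rewrite /X /Hc /E -!big_split /=.
rewrite (eq_bigr (fun _ => 1)) ?sum_nat_const ?card_ord ?muln1 // => i _.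
exact: eqA.
Qed.

Lemma sumB c : Y c + E c <= k.-1.
Proof.
rewrite /Y /E (exchange_big) -big_split /=.
apply: (@leq_trans (\sum_(j < k.-1) 1)); last by rewrite sum_nat_const card_ord muln1.
by apply: leq_sum => j _; exact: eqB.
Qed.

Lemma adj c : 0 < Y c -> X c = 0.
Proof.
case: H => Hv _.
rewrite /Y /X; case: (pickP (fun j => cv (inr j) == c)) => [j Hj|H0]; last first.
  by rewrite big1 // => j _; rewrite H0.
move=> _; apply: big1 => i _; apply/eqP; rewrite eqb0; apply/negP => /eqP Hi.
by apply: (Hv (inl (i, j)) (inl i) (inr j) erefl); rewrite Hi (eqP Hj).
Qed.

Lemma key c : Y c + (0 < Y c) <= Hc c.
Proof.
have := sumA c; have := sumB c.
case: (posnP (Y c)) => [->|Hy]; first by [].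
rewrite adj //; lia.
Qed.

Lemma sum_eq1 (n : nat) (x : 'I_n) : \sum_(c < n) (x == c) = 1.
Proof. by rewrite (bigD1 x) //= eqxx big1 // => c' /negbTE; rewrite eq_sym => ->. Qed.

Lemma totH : \sum_c Hc c = k.
Proof.
rewrite /Hc exchange_big /= (eq_bigr (fun _ => 1)) ?sum_nat_const ?card_ord ?muln1 // => i _.
exact: sum_eq1.
Qed.

Lemma totY : \sum_c Y c = k.-1.
Proof.
rewrite /Y exchange_big /= (eq_bigr (fun _ => 1)) ?sum_nat_const ?card_ord ?muln1 // => i _.
exact: sum_eq1.
Qed.

Lemma final (j0 : 'I_k.-1) i : ce (inr i) = cv (inr j0).
Proof.
set c0 := cv (inr j0).
have Y0 : 0 < Y c0 by rewrite /Y (bigD1 j0) //= eqxx.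
have big : k.-1 + \sum_c (0 < Y c : nat) <= k.
  rewrite -totY -big_split /=; apply: (@leq_trans (\sum_c Hc c)); last by rewrite totH.
  apply: leq_sum => c _; exact: key.
have Yz : forall c1, c1 != c0 -> Y c1 = 0.
  move=> c1 ne; apply/eqP; rewrite -leqn0 leqNgt; apply/negP => Y1.
  move: big; rewrite (bigD1 c0) //= (bigD1 c1) //= ?Y0 ?Y1.
  move: hk; lia.
have Yc0 : Y c0 = k.-1 by rewrite -totY (bigD1 c0) //= big1 ?addn0 // => c /Yz.
have Hk : k <= Hc c0.
  have := key c0; rewrite Yc0; move: hk; lia.
by apply/eqP; apply: (sum_all1 (b := fun i => ce (inr i) == c0)).
Qed.
End U.

Section Ex.
Variables (k : nat) (hk : 0 < k).

Definition md a := if a < k then a else a - k.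

Lemma inord_inj x y : x <= k -> y <= k -> inord x = inord y :> 'I_k.+1 -> x = y.
Proof. by move=> hx hy /(congr1 val); rewrite /= !inordK. Qed.

Lemma inord_max x : x < k -> inord x <> ord_max :> 'I_k.+1.
Proof. by move=> hx /(congr1 val); rewrite /= inordK //; lia. Qed.

Lemma md_lt a : a < k + k -> md a < k.
Proof. rewrite /md; case: (ltnP a k) => ? ?; lia. Qed.
Lemma md_inj a b : a < k + k -> b < k + k -> md a = md b -> a = b \/ a = b + k \/ b = a + k.
Proof. rewrite /md; case: (ltnP a k); case: (ltnP b k) => ? ? ? ? ?; lia. Qed.

Lemma inord_md_inj a b : inord (md a) = inord (md b) :> 'I_k.+1 -> a < k + k -> b < k + k ->
  a = b \/ a = b + k \/ b = a + k.
Proof.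
move=> E ha hb; apply: md_inj => //.
by apply: inord_inj E; apply: ltnW; apply: md_lt.
Qed.

Definition cv0 (v : Hk_V k) : 'I_k.+1 :=
  match v with inl i => inord (md (i + k.-1)) | inr _ => ord_max end.
Definition ce0 (e : Hk_E k) : 'I_k.+1 :=
  match e with inl (i, j) => inord (md (i + j)) | inr _ => ord_max end.

Lemma incE v e : incident (@Hk_ends k) v e <->
  match e with inl (i, j) => v = inl i \/ v = inr j | inr i => v = inl i end.
Proof.
rewrite /incident; case: e => [[i j]|i] /=; split.
- by case=> [->|[->]]; [left|right].
- by case=> ->; [left|right].
- by case.
- by move=> ->; left.
Qed.

Lemma exist_col : is_total_colouring (@Hk_ends k) cv0 ce0.
Proof.
split; [|split].
- case=> [[i j]|i] u w //= [<- <-] /=.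
  apply: inord_max; have := ltn_ord i; have := ltn_ord j => ? ?; apply: md_lt; lia.
- move=> e f v ne /incE He /incE Hf.
  case: e f ne He Hf => [[i j]|i] [[i' j']|i'] ne /= He Hf.
  all: repeat match goal with H : _ \/ _ |- _ => destruct H end; subst; try discriminate.
  all: repeat match goal with H : inl _ = inl _ |- _ => case: H => H; subst | H : inr _ = inr _ |- _ => case: H => H; subst end.
  + move=> Eq; apply: ne.
    have := ltn_ord i'; have := ltn_ord j; have := ltn_ord j' => ? ? ?.
    have E := inord_md_inj Eq ltac:(lia) ltac:(lia).
    have -> : j = j' by apply: ord_inj; move: E; lia.
    by [].
  + move=> Eq; apply: ne.
    have := ltn_ord i'; have := ltn_ord i; have := ltn_ord j' => ? ? ?.
    have E := inord_md_inj Eq ltac:(lia) ltac:(lia).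
    have -> : i = i' by apply: ord_inj; move: E; lia.
    by [].
  + apply: inord_max; have := ltn_ord i'; have := ltn_ord j => ? ?; apply: md_lt; lia.
  + apply: nesym; apply: inord_max; have := ltn_ord i'; have := ltn_ord j' => ? ?; apply: md_lt; lia.
  + by case: ne.
- move=> e v /incE He.
  case: e He => [[i j]|i] /= He.
  all: repeat match goal with H : _ \/ _ |- _ => destruct H end; subst => /=.
  + move=> Eq.
    have := ltn_ord i; have := ltn_ord j => ? ?.
    have E := inord_md_inj Eq ltac:(lia) ltac:(lia).
    lia.
  + apply: nesym; apply: inord_max; have := ltn_ord i; have := ltn_ord j => ? ?; apply: md_lt; lia.
  + apply: inord_max; have := ltn_ord i => ?; apply: md_lt; lia.
Qed.
End Ex.

Theorem lemma2 (k : nat) (hk : 0 < k) :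
  (exists (cv : Hk_V k -> 'I_k.+1) (ce : Hk_E k -> 'I_k.+1),
      is_total_colouring (@Hk_ends k) cv ce) /\
  (forall (cv : Hk_V k -> 'I_k.+1) (ce : Hk_E k -> 'I_k.+1),
      is_total_colouring (@Hk_ends k) cv ce ->
      forall i j : 'I_k, ce (Hk_half i) = ce (Hk_half j)).
Proof.
split.
  by exists (@cv0 k), (@ce0 k); apply: exist_col.
move=> cv ce Hc i j.
case: (ltnP 1 k) => hk2.
  have hj : 0 < k.-1 by rewrite -subn1 subn_gt0.
  rewrite /Hk_half (final hk Hc (Ordinal hj) i) (final hk Hc (Ordinal hj) j) //.
have k1 : k = 1 by apply/eqP; rewrite eqn_leq hk2 hk.
by congr (ce (Hk_half _)); apply: ord_inj; move: (ltn_ord i) (ltn_ord j); move: k1; lia.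
Qed.
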